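(* Let $G$ be an interval filament graph with a filament representation $\varphi$. Suppose a cop occupies the vertex $u$ and the robber occupies a vertex whose filament is contained in the bottom region of $\varphi(u)$. Then, as long as a cop stays on $u$, the robber stays on vertices whose filaments are contained in the bottom region of $\varphi(u)$ (any move leaving it results in his immediate capture).
   Context: An interval filament on $[a,b]$ ($a<b$) is the graph of a continuous $f\colon[a,b]\to\mathbb{R}$ with $f(a)=f(b)=0$ and $f>0$ on $(a,b)$. An interval filament graph has a representation $\varphi$ assigning filaments to vertices so that distinct vertices are adjacent iff their filaments intersect. Each filament splits the upper half-plane into the unbounded top region and the bounded bottom region (the region between the filament and the $x$-axis). Game of cops and robber: alternate moves, each piece stays or moves to an adjacent vertex; capture when a cop occupies the robber's vertex (a robber moving to a neighbor of a cop's vertex is captured in the next cop move). *)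

(* Defs.v *)
From Stdlib Require Export Reals.
Open Scope R_scope.

(* An interval filament on [a,b], a < b: the graph of a continuous
   f : [a,b] -> R with f a = f b = 0 and f > 0 on (a,b).
   f is a total function R -> R; only its values on [a,b] matter. *)
Record filament := Filament {
  fa : R;
  fb : R;
  ff : R -> R;
  f_lt : fa < fb;
  f_cont : forall x, fa <= x <= fb ->
             continue_in ff (fun y => fa <= y <= fb) x;
  f_a0 : ff fa = 0;
  f_b0 : ff fb = 0;
  f_pos : forall x, fa < x < fb -> 0 < ff x
}.

Definition on_filament (F : filament) (p : R * R) : Prop :=
  fa F <= fst p <= fb F /\ snd p = ff F (fst p).

Definition fil_intersect (F1 F2 : filament) : Prop :=
  exists p, on_filament F1 p /\ on_filament F2 p.

Definition bottom_region (F : filament) (p : R * R) : Prop :=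
  fa F < fst p < fb F /\ 0 <= snd p < ff F (fst p).

Definition contained_in_bottom (F1 F2 : filament) : Prop :=
  forall p, on_filament F1 p -> bottom_region F2 p.

Definition filament_rep {V : Type} (adj : V -> V -> Prop)
  (phi : V -> filament) : Prop :=
  forall u v, u <> v -> (adj u v <-> fil_intersect (phi u) (phi v)).

(* Main.v *)
Require Import Defs.
From Stdlib Require Import Reals Lra Classical.
Open Scope R_scope.

Definition clamp (c d x : R) := Rmax c (Rmin d x).

Lemma clamp_in c d x : c <= d -> c <= clamp c d x <= d.
Proof. intros; unfold clamp, Rmax, Rmin; repeat destruct Rle_dec; lra. Qed.

Lemma clamp_id c d x : c <= x <= d -> clamp c d x = x.
Proof. intros; unfold clamp, Rmax, Rmin; repeat destruct Rle_dec; lra. Qed.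

Lemma clamp_lip c d x y : c <= d -> Rabs (clamp c d y - clamp c d x) <= Rabs (y - x).
Proof.
  intros; unfold clamp, Rmax, Rmin; repeat destruct Rle_dec;
  unfold Rabs; repeat destruct Rcase_abs; lra.
Qed.

Lemma clamp_cont (f : R -> R) a b c d : a <= c -> c <= d -> d <= b ->
  (forall x, a <= x <= b -> continue_in f (fun y => a <= y <= b) x) ->
  continuity (fun x => f (clamp c d x)).
Proof.
  intros Hac Hcd Hdb H x eps Heps.
  assert (Hx := clamp_in c d x Hcd).
  destruct (H (clamp c d x) ltac:(lra) eps Heps) as [alp [Halp Hal]].
  exists alp; split; auto.
  intros y [_ Hy]. simpl in *. unfold R_dist in *.
  destruct (Req_dec (clamp c d y) (clamp c d x)) as [E|E].
  - rewrite E, Rminus_diag, Rabs_R0; lra.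
  - apply Hal. assert (Hy' := clamp_in c d y Hcd).
    split. split. lra. auto.
    simpl; unfold R_dist. eapply Rle_lt_trans. apply clamp_lip; lra. auto.
Qed.

Lemma fil_nonneg (F : filament) x : fa F <= x <= fb F -> 0 <= ff F x.
Proof.
  intros H. destruct (Req_dec x (fa F)) as [E|E]. subst; rewrite f_a0; lra.
  destruct (Req_dec x (fb F)) as [E'|E']. subst; rewrite f_b0; lra.
  left; apply f_pos; lra.
Qed.

Lemma cross (F G : filament) c d : c <= d ->
  fa F <= c -> d <= fb F -> fa G <= c -> d <= fb G ->
  (ff F c - ff G c) * (ff F d - ff G d) <= 0 -> fil_intersect F G.
Proof.
  intros Hcd H1 H2 H3 H4 Hp.
  set (k := fun x => ff F (clamp c d x) - ff G (clamp c d x)).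
  assert (Hk : continuity k).
  { apply continuity_minus.
    - apply (clamp_cont _ (fa F) (fb F)); auto. apply f_cont.
    - apply (clamp_cont _ (fa G) (fb G)); auto. apply f_cont. }
  assert (Hkc : k c = ff F c - ff G c) by (unfold k; rewrite clamp_id; lra).
  assert (Hkd : k d = ff F d - ff G d) by (unfold k; rewrite clamp_id; lra).
  assert (Hz : exists z, c <= z <= d /\ k z = 0).
  { destruct (Req_dec (k c) 0). exists c; split; auto; lra.
    destruct (Req_dec (k d) 0). exists d; split; auto; lra.
    destruct (Req_dec c d) as [E|E].
    { subst. rewrite Hkc in *. exfalso. nra. }
    destruct (Rlt_dec (k c) 0).
    - assert (0 < k d) by nra.
      destruct (IVT k c d Hk ltac:(lra) ltac:(lra) ltac:(lra)) as [z Hz]. eauto.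
    - assert (0 < k c) by lra. assert (k d < 0) by nra.
      destruct (IVT (opp_fct k) c d (continuity_opp _ Hk) ltac:(lra))
        as [z Hz]; unfold opp_fct in *; try lra.
      exists z. lra. }
  destruct Hz as [z [Hz Hkz]]. unfold k in Hkz. rewrite clamp_id in Hkz by lra.
  exists (z, ff F z). unfold on_filament; simpl. repeat split; lra.
Qed.

Theorem lemma1 (V : Type) (adj : V -> V -> Prop) (phi : V -> filament)
  (Hsym : forall x y, adj x y -> adj y x)
  (Hirr : forall x, ~ adj x x)
  (Hrep : filament_rep adj phi)
  (u v w : V) :
  contained_in_bottom (phi v) (phi u) ->
  (w = v \/ adj v w) ->
  ~ contained_in_bottom (phi w) (phi u) ->
  (w = u \/ adj w u).
Proof.
  intros Hc Hw Hn.
  destruct Hw as [E|Hvw]. { subst; contradiction. }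
  destruct (classic (w = u)) as [E|Hwu]. { left; auto. }
  right.
  assert (Hvw' : v <> w) by (intro E; subst; apply (Hirr w); auto).
  apply (proj2 (Hrep w u Hwu)).
  destruct (proj1 (Hrep v w Hvw') Hvw) as [p [Hpv Hpw]].
  assert (Hpb := Hc p Hpv).
  assert (Hq : exists q, on_filament (phi w) q /\ ~ bottom_region (phi u) q).
  { apply NNPP; intro Hne; apply Hn; intros q Hq.
    apply NNPP; intro Hb; apply Hne; eauto. }
  destruct Hq as [q [Hqw Hqb]].
  set (F := phi w) in *. set (G := phi u) in *.
  destruct p as [x0 y0]; destruct q as [x1 y1].
  unfold on_filament, bottom_region in *; simpl in *.
  destruct Hpw as [Hx0 Hy0]; destruct Hqw as [Hx1 Hy1]; subst y0 y1.
  assert (Hn1 := fil_nonneg F x1 Hx1).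
  assert (Hn0 := fil_nonneg F x0 Hx0).
  destruct Hpb as [Hb1 Hb2].
  destruct (Rle_dec x1 (fa G)).
  - assert (Hn2 := fil_nonneg F (fa G) ltac:(lra)).
    apply (cross F G (fa G) x0); try lra. rewrite f_a0. nra.
  - destruct (Rle_dec (fb G) x1).
    + assert (Hn2 := fil_nonneg F (fb G) ltac:(lra)).
      apply (cross F G x0 (fb G)); try lra. rewrite f_b0. nra.
    + assert (ff G x1 <= ff F x1).
      { apply Rnot_lt_le; intro; apply Hqb; repeat split; lra. }
      destruct (Rle_dec x0 x1).
      * apply (cross F G x0 x1); try lra. nra.
      * apply (cross F G x1 x0); try lra. nra.
Qed.
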